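(* For any positive integer $n$, \[ \sum_{\sum_i i y_{k,i}=n}\binom{\sum_i y_{k,i}}{y_{k,1},\ldots,y_{k,n}}(-1)^{\sum_i y_{k,i}}\prod_{i=1}^{n}\left[\binom{n}{i}\right]^{y_{k,i}}=(-1)^n\binom{2n-1}{n-1}. \]
   Context: The sum runs over all partitions of $n$, each represented as a tuple $(y_{k,1},\ldots,y_{k,n})$ of non-negative integers with $\sum_{i=1}^n i\,y_{k,i}=n$; sums $\sum_i$ run over $i=1,\ldots,n$. $\binom{N}{a_1,\ldots,a_n}=\frac{N!}{a_1!\cdots a_n!}$ is the multinomial coefficient. *)

(* Defs.v *)
From mathcomp Require Import all_boot all_order all_algebra.
Set Implicit Arguments. Unset Strict Implicit. Unset Printing Implicit Defensive.
Import GRing.Theory Num.Theory.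

Definition multinom (n : nat) (a : 'I_n -> nat) : nat :=
  (\sum_(i < n) a i)`! %/ \prod_(i < n) (a i)`!.

(* A partition of n encoded by its multiplicities: y i is the multiplicity of
   the part (i+1), for i : 'I_n.  Since each multiplicity is at most n, we
   range over y : {ffun 'I_n -> 'I_n.+1}. *)
Definition is_partition (n : nat) (y : {ffun 'I_n -> 'I_n.+1}) : bool :=
  \sum_(i < n) i.+1 * y i == n.

(* Main.v *)
Require Import Defs.
From mathcomp Require Import all_boot all_order all_algebra.
From mathcomp Require Import zify ring.
Import GRing.Theory Num.Theory.
Set Implicit Arguments. Unset Strict Implicit.
Lemma prod_fact_dvd n (a : 'I_n -> nat) :
  (\prod_(i < n) (a i)`! %| (\sum_(i < n) a i)`!)%N.
Proof.
elim: n a => [|n IH] a; first by rewrite !big_ord0.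
rewrite big_ord_recr big_ord_recr /=.
set S := (\sum_(i < n) _)%N.
have := bin_fact (leq_addl S (a ord_max)).
rewrite addnK => <-.
rewrite [X in (X %| _)%N]mulnC mulnCA dvdn_mul // dvdn_mull // IH.
Qed.

Lemma multinom_fact n (a : 'I_n -> nat) :
  (multinom a * \prod_(i < n) (a i)`! = (\sum_(i < n) a i)`!)%N.
Proof. by rewrite /multinom divnK // prod_fact_dvd. Qed.

Definition decf {n} (i : 'I_n) (a : 'I_n -> nat) := fun j => (a j - (j == i))%N.

Lemma sum_decf n (i : 'I_n) a : (0 < a i)%N ->
  (\sum_(j < n) decf i a j = (\sum_(j < n) a j).-1)%N.
Proof.
move=> Hi; rewrite (bigD1 i) //= [in RHS](bigD1 i) //= /decf eqxx.
rewrite (eq_bigr a); last by move=> j /negbTE ->; rewrite subn0.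
by case: (a i) Hi => // k _; rewrite subn1 addSn.
Qed.

Lemma wsum_decf n (i : 'I_n) a : (0 < a i)%N ->
  (\sum_(j < n) j.+1 * decf i a j = (\sum_(j < n) j.+1 * a j) - i.+1)%N.
Proof.
move=> Hi; rewrite (bigD1 i) //= [in RHS](bigD1 i) //= /decf eqxx.
rewrite (eq_bigr (fun j : 'I_n => j.+1 * a j)%N); last by move=> j /negbTE ->; rewrite subn0.
rewrite mulnBr muln1 /=. have : (i.+1 <= i.+1 * a i)%N by rewrite leq_pmulr. lia.
Qed.

Lemma prod_decf n (i : 'I_n) a : (0 < a i)%N ->
  (\prod_(j < n) (a j)`! = a i * \prod_(j < n) (decf i a j)`!)%N.
Proof.
move=> Hi; rewrite (bigD1 i) //= [in RHS](bigD1 i) //= /decf eqxx.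
rewrite [in RHS](eq_bigr (fun j : 'I_n => (a j)`!)); last by move=> j /negbTE ->; rewrite subn0.
by case: (a i) Hi => // k _; rewrite factS subn1 /= mulnA.
Qed.

Lemma multinom_pascal n (a : 'I_n -> nat) : (0 < \sum_(j < n) a j)%N ->
  multinom a = (\sum_(i < n | 0 < a i) multinom (decf i a))%N.
Proof.
move=> Hs.
have Hp : (0 < \prod_(j < n) (a j)`!)%N.
  by rewrite prodn_gt0 // => j; rewrite fact_gt0.
apply/eqP; rewrite -(eqn_pmul2r Hp) multinom_fact big_distrl /=.
rewrite [in X in _ == X](eq_bigr (fun i : 'I_n => a i * (\sum_(j < n) a j).-1`!)%N); last first.
  move=> i Hi; rewrite (prod_decf Hi) mulnCA multinom_fact sum_decf // mulnC.
rewrite -big_distrl /=.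
have E : (\sum_(i < n | 0 < a i) a i = \sum_(i < n) a i)%N.
  rewrite [RHS](bigID (fun i => 0 < a i)%N) /= [X in (_ + X)%N]big1 ?addn0 //.
  by move=> i; rewrite lt0n negbK => /eqP.
by rewrite E; case: (\sum_(i < n) a i)%N Hs => // k _; rewrite factS.
Qed.
Local Open Scope ring_scope.
Definition Dg (k m : nat) : int := (-1) ^+ m * ('C((k + m).-1, m))%:R.

Lemma Dg0 k : Dg k 0 = 1.
Proof. by rewrite /Dg expr0 mul1r bin0. Qed.

Lemma DgS k t : Dg k t.+1 = Dg k.+1 t.+1 + Dg k.+1 t.
Proof.
rewrite /Dg !addSn !addnS /= binS natrD exprS; ring.
Qed.

Lemma Eid k m : \sum_(0 <= j < m.+1) ('C(k, j))%:R * Dg k (m - j) = (m == 0%N)%:R.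
Proof.
elim: k m => [|k IH] m.
  rewrite big_nat_recl // big1 /=; last first.
    by move=> j _; rewrite bin0n /= mul0r.
  rewrite addr0 bin0 mul1r subn0 /Dg add0n.
  by case: m => [|m] /=; rewrite ?bin0 ?mulr1 // bin_small // mulr0.
rewrite -(IH m).
case: m => [|m]; first by rewrite !big_nat1 !bin0 !Dg0.
have H1 : \sum_(0 <= j < m.+2) ('C(k.+1, j))%:R * Dg k.+1 (m.+1 - j)
  = \sum_(0 <= j < m.+2) ('C(k, j))%:R * Dg k.+1 (m.+1 - j)
    + \sum_(0 <= j < m.+1) ('C(k, j))%:R * Dg k.+1 (m - j).
  rewrite big_nat_recl // [in RHS]big_nat_recl // !bin0 subn0 -addrA; congr (_ + _).
  rewrite -big_split /=; apply: eq_bigr => j _.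
  by rewrite binS natrD mulrDl subSS.
rewrite H1 [X in _ = X]big_nat_recr //= subnn Dg0.
rewrite [X in X + _]big_nat_recr //= subnn Dg0.
rewrite addrAC; congr (_ + _).
rewrite -big_split /=; apply: eq_big_nat => j /andP [_ Hj].
by rewrite subSn // (DgS k) mulrDr.
Qed.

Section Main.
Variable n : nat.
Local Notation Y := {ffun 'I_n -> 'I_n.+1}.

Definition wt (y : Y) : nat := (\sum_(i < n) i.+1 * y i)%N.
Definition bb (i : nat) : int := - ('C(n, i.+1))%:R.
Definition G (y : Y) : int :=
  (multinom (fun i => nat_of_ord (y i)))%:R * \prod_(i < n) bb i ^+ y i.
Definition T (m : nat) : int := \sum_(y : Y | wt y == m) G y.
Definition dec (i : 'I_n) (y : Y) : Y := [ffun j => inord (y j - (j == i))].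
Definition inc (i : 'I_n) (y : Y) : Y := [ffun j => inord (y j + (j == i))].

Lemma multinom_ext (a a' : 'I_n -> nat) : (forall i, a i = a' i) -> multinom a = multinom a'.
Proof. by move=> H; rewrite /multinom (eq_bigr _ (fun i _ => H i)) (eq_bigr _ (fun i _ => congr1 _ (H i))). Qed.

Lemma decE i y j : nat_of_ord (dec i y j) = decf i (fun j => nat_of_ord (y j)) j.
Proof.
rewrite ffunE inordK // /decf; apply: leq_ltn_trans (ltn_ord (y j)); exact: leq_subr.
Qed.

Lemma wt_ge (a : 'I_n -> nat) (i : 'I_n) : (i.+1 * a i <= \sum_(j < n) j.+1 * a j)%N.
Proof. by rewrite (bigD1 i) //= leq_addr. Qed.

Lemma G_dec y : (0 < wt y)%N ->
  G y = \sum_(i < n | (0 < y i)%N) bb i * G (dec i y).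
Proof.
move=> Hw.
have Hs : (0 < \sum_(j < n) nat_of_ord (y j))%N.
  rewrite lt0n; apply/negP => /eqP /eqP; rewrite sum_nat_eq0 => /forallP H.
  move: Hw; rewrite /wt lt0n => /negP; apply; apply/eqP.
  by apply: big1 => j _; move: (H j) => /eqP ->; rewrite muln0.
rewrite /G (multinom_pascal Hs) natr_sum big_distrl /=.
apply: eq_bigr => i Hi.
rewrite mulrCA; congr (_ * _).
  by congr (_%:R); apply: multinom_ext => j; rewrite decE.
rewrite (bigD1 i) //= [in RHS](bigD1 i) //= decE /decf eqxx mulrA -exprS.
case: (nat_of_ord (y i)) Hi => // k _; rewrite subn1 /=; congr (_ * _).
apply: eq_bigr => j /negbTE Hj; by rewrite decE /decf Hj subn0.
Qed.

Lemma dec_inc (i : 'I_n) (y : Y) : (y i < n)%N -> dec i (inc i y) = y.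
Proof.
move=> Hy; apply/ffunP => j; rewrite /dec /inc !ffunE; apply: ord_inj.
have H1 : (y j + (j == i) < n.+1)%N.
  case: (eqVneq j i) => [->|_] /=; first by rewrite addn1 ltnS.
  by rewrite addn0.
rewrite (inordK H1) addnK inordK //.
Qed.

Lemma inc_dec (i : 'I_n) (y : Y) : (0 < y i)%N -> inc i (dec i y) = y.
Proof.
move=> Hy; apply/ffunP => j; apply: ord_inj.
rewrite ffunE /= ffunE.
have H1 : (y j - (j == i) < n.+1)%N by apply: leq_ltn_trans (leq_subr _ _) _.
rewrite (inordK H1).
case: (eqVneq j i) => [->|_] /=; last by rewrite subn0 addn0 inordK.
by rewrite subnK // inordK.
Qed.

Lemma inc_dec0 (i : 'I_n) (y : Y) : nat_of_ord (y i) = 0%N -> inc i (dec i y) != y.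
Proof.
move=> Hy; apply/negP => /eqP /ffunP /(_ i) /(congr1 (@nat_of_ord _)).
rewrite ffunE decE /decf eqxx Hy /= inordK //.
by case: n i y Hy => [|k] [].
Qed.

Lemma wt_dec (i : 'I_n) (y : Y) : (0 < y i)%N -> wt (dec i y) = (wt y - i.+1)%N.
Proof.
move=> Hi; rewrite /wt -(wsum_decf (a := fun j => nat_of_ord (y j))) //.
by apply: eq_bigr => j _; rewrite decE.
Qed.

Lemma Trec m : (0 < m)%N -> (m <= n)%N ->
  T m = \sum_(i < n | (i < m)%N) bb i * T (m - i.+1).
Proof.
move=> Hm Hmn.
rewrite /T (eq_bigr (fun y : Y => \sum_(i < n) if (0 < y i)%N then bb i * G (dec i y) else 0)); last first.
  by move=> y /eqP Hy; rewrite G_dec ?Hy // big_mkcond.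
rewrite exchange_big /= [RHS]big_mkcond /=; apply: eq_bigr => i _.
rewrite -big_mkcondr /=.
case: ltnP => Him; last first.
  apply: big_pred0 => y; apply/negP => /andP [/eqP Hw Hy].
  have := wt_ge (fun j => nat_of_ord (y j)) i; rewrite -/(wt y) Hw.
  have : (i.+1 <= i.+1 * y i)%N by rewrite leq_pmulr.
  lia.
rewrite big_distrr /=.
rewrite [RHS](reindex_onto (dec i) (inc i)) /=; last first.
  move=> y /eqP Hw; apply: dec_inc.
  have := wt_ge (fun j => nat_of_ord (y j)) i; rewrite -/(wt y) Hw.
  have : (y i <= i.+1 * y i)%N by rewrite leq_pmull.
  lia.
apply: eq_bigl => y.
case: (posnP (y i)) => Hy.
  rewrite (negbTE (inc_dec0 Hy)) !andbF. by [].
rewrite (inc_dec Hy) eqxx andbT wt_dec // andbT.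
have := wt_ge (fun j => nat_of_ord (y j)) i; rewrite -/(wt y).
have : (i.+1 <= i.+1 * y i)%N by rewrite leq_pmulr.
move=> h1 h2; apply/eqP/eqP; lia.
Qed.

Lemma T0 : T 0 = 1.
Proof.
rewrite /T (eq_bigl (pred1 [ffun=> ord0])); last first.
  move=> y /=; rewrite /wt sum_nat_eq0; apply/forallP/eqP => [H|->].
    apply/ffunP => j; rewrite ffunE; apply: ord_inj => /=.
    by move: (H j) => /=; rewrite muln_eq0 /= => /eqP.
  by move=> j; rewrite ffunE muln0.
rewrite big_pred1_eq /G /multinom.
rewrite big1 ?big1 //=.
  by move=> j _; rewrite ffunE expr0.
  by move=> j _; rewrite ffunE.
by move=> j _; rewrite ffunE.
Qed.

Lemma T_Dg m : (m <= n)%N -> T m = Dg n m.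
Proof.
elim/ltn_ind: m => m IH Hmn.
case: (posnP m) => [->|Hm]; first by rewrite T0 Dg0.
rewrite Trec //.
rewrite (eq_bigr (fun i : 'I_n => bb i * Dg n (m - i.+1))); last first.
  move=> i Hi; rewrite IH //; last by apply: leq_trans (leq_subr _ _) Hmn.
  lia.
rewrite (big_ord_narrow (F := fun i : 'I_n => bb i * Dg n (m - i.+1))) /=.
rewrite -(big_mkord xpredT (fun i => bb i * Dg n (m - i.+1))).
have := Eid n m; rewrite big_nat_recl // bin0 mul1r subn0.
have -> : (m == 0%N) = false by case: m Hm {IH Hmn}.
move/eqP; rewrite addr_eq0 => /eqP ->.
rewrite -sumrN; apply: eq_bigr => i _.
by rewrite /bb mulNr.
Qed.

End Main.

Lemma main_eq (n : nat) (hn : (0 < n)%N) :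
  \sum_(y : {ffun 'I_n -> 'I_n.+1} | is_partition y)
     ((multinom (fun i => nat_of_ord (y i)))%:R
      * (-1) ^+ (\sum_(i < n) nat_of_ord (y i))%N
      * \prod_(i < n) ('C(n, i.+1))%:R ^+ nat_of_ord (y i) : int)
  = (-1) ^+ n * ('C(2 * n - 1, n - 1))%:R.
Proof.
have -> : (-1) ^+ n * ('C(2 * n - 1, n - 1))%:R = Dg n n :> int.
  rewrite /Dg; congr (_ * _%:R).
  rewrite -subn1 mul2n -addnn -[in RHS](bin_sub (n := (n + n - 1)%N) (m := n)); last lia.
  congr 'C(_, _); lia.
rewrite -T_Dg // /T; apply: eq_big => y; first by [].
move=> _; rewrite /G -mulrA; congr (_ * _).
rewrite expr_sum -big_split /=; apply: eq_bigr => i _.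
by rewrite /bb -exprMn mulN1r.
Qed.

Unset Implicit Arguments.

Theorem corollary4p1 (n : nat) (hn : (0 < n)%N) :
  \sum_(y : {ffun 'I_n -> 'I_n.+1} | is_partition y)
     ((multinom (fun i => nat_of_ord (y i)))%:R
      * (-1) ^+ (\sum_(i < n) nat_of_ord (y i))%N
      * \prod_(i < n) ('C(n, i.+1))%:R ^+ nat_of_ord (y i) : int)
  = (-1) ^+ n * ('C(2 * n - 1, n - 1))%:R.
Proof. exact: main_eq. Qed.
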